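(* Let $q=2^{v}$ and $s=2^{k}$ with $1\le k\le v$, let $n=(s-1)q+s$, and let $\mathcal{K}$ be a maximal $(n,s)$-arc in $PG(2,q)$. Then $\mathcal{K}$ is an optimal $(1,\mu)$-saturating $n$-set with $\mu=\frac{1}{2}(s-1)n$. Moreover, a linear code $C$ over $\mathbb{F}_q$ corresponding to $\mathcal{K}$ is an $[n,n-3]_q$ code with covering radius $2$, and $C$ is a $(2,\mu)$-PMCF code if $s=2$ and a $(2,\mu)$-APMCF code if $s\ge 4$.
   Context: $PG(N,q)$ is the $N$-dimensional projective space over $\mathbb{F}_q$. A maximal $(n,s)$-arc in $PG(2,q)$ is a set of $n$ points such that every line meets it in either $0$ or $s$ points. For a point set $S$, a secant of $S$ is a line $\ell$ with $|\ell\cap S|\ge2$, counted with multiplicity $\binom{|\ell\cap S|}{2}$. A set $S$ of $n$ points of $PG(N,q)$ is a $(1,\mu)$-saturating $n$-set if (M1) $S$ spans $PG(N,q)$, (M2) $S\neq PG(N,q)$, and (M3) every point $Q\notin S$ lies on secants of $S$ whose multiplicities sum to at least $\mu$; it is optimal if for every $Q\notin S$ this sum is exactly $\mu$. A linear code of length $n$ over $\mathbb{F}_q$ corresponds to $S=\{P_1,\dots,P_n\}\subset PG(N,q)$ if it has a parity-check matrix whose $i$-th column is a homogeneous coordinate vector of $P_i$. An $[n,k]_q$ code is a linear code of length $n$ and dimension $k$; its covering radius $R$ is $\max_{x\in\mathbb{F}_q^n} d(x,C)$ (Hamming distance), and $d(C)$ is its minimum distance. A code $C$ with covering radius $R$ is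 an $(R,\mu)$-APMCF code if every $x\in\mathbb{F}_q^n$ with $d(x,C)=R$ is at distance exactly $R$ from exactly $\mu$ codewords; it is an $(R,\mu)$-PMCF code if in addition $d(C)\ge 2R$. *)

(* Defs.v *)
From HB Require Import structures.
From mathcomp Require Import all_boot all_order all_algebra.
Set Implicit Arguments. Unset Strict Implicit. Unset Printing Implicit Defensive.
Import GRing.Theory.
Local Open Scope ring_scope.

(* Projective space PG(N, F): a point is a 1-dimensional subspace of F^(N+1),
   a line is a 2-dimensional subspace; a subspace is represented canonically
   by the square matrix <<U>>%MS (mxalgebra's canonical generator). *)
Section PG.
Variables (F : finFieldType) (N : nat).

Definition PGpoints : {set 'M[F]_N.+1} :=
  [set U | (\rank U == 1)%N && (<<U>>%MS == U)].
Definition PGlines : {set 'M[F]_N.+1} :=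
  [set U | (\rank U == 2)%N && (<<U>>%MS == U)].

Definition meetL (L : 'M[F]_N.+1) (S : {set 'M[F]_N.+1}) : {set 'M[F]_N.+1} :=
  [set P in S | (P <= L)%MS].

Definition secant_mult_sum (S : {set 'M[F]_N.+1}) (Q : 'M[F]_N.+1) : nat :=
  (\sum_(L in PGlines | (Q <= L)%MS) 'C(#|meetL L S|, 2))%N.

Definition spansPG (S : {set 'M[F]_N.+1}) : bool :=
  (\rank (\sum_(P in S) P)%MS == N.+1)%N.

Definition saturating_nset (n : nat) (S : {set 'M[F]_N.+1}) (mu : nat) : Prop :=
  [/\ S \subset PGpoints, #|S| = n,
      spansPG S, S != PGpoints &
      forall Q, Q \in PGpoints :\: S -> (mu <= secant_mult_sum S Q)%N].

Definition optimal_saturating_nset (n : nat) (S : {set 'M[F]_N.+1}) (mu : nat) : Prop :=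
  saturating_nset n S mu /\
  forall Q, Q \in PGpoints :\: S -> secant_mult_sum S Q = mu.

Definition col_point n (H : 'M[F]_(N.+1, n)) (i : 'I_n) : 'M[F]_N.+1 :=
  <<(col i H)^T>>%MS.

Definition corresponds n (H : 'M[F]_(N.+1, n)) (S : {set 'M[F]_N.+1}) : Prop :=
  [/\ forall i, col i H != 0,
      injective (col_point H) &
      [set col_point H i | i : 'I_n] = S].
End PG.

Definition maximal_arc (F : finFieldType) (n s : nat) (K : {set 'M[F]_3}) : Prop :=
  [/\ K \subset PGpoints F 2, #|K| = n &
      forall L, L \in PGlines F 2 -> #|meetL L K| = 0%N \/ #|meetL L K| = s].

Section Codes.
Variables (F : finFieldType) (n : nat).

(* the linear code with parity-check matrix H : its row space *)
Definition code_of m (H : 'M[F]_(m, n)) : 'M[F]_n := kermx H^T.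

Definition hdist (x y : 'rV[F]_n) : nat := #|[set i : 'I_n | x 0 i != y 0 i]|.

Definition dist_code (C : 'M[F]_n) (x : 'rV[F]_n) : nat :=
  \big[minn/n]_(c : 'rV[F]_n | (c <= C)%MS) hdist x c.

Definition covering_radius (C : 'M[F]_n) : nat :=
  (\max_(x : 'rV[F]_n) dist_code C x)%N.

(* minimum distance (n+1 plays the role of infinity for the trivial code) *)
Definition min_dist (C : 'M[F]_n) : nat :=
  \big[minn/n.+1]_(p : 'rV[F]_n * 'rV[F]_n |
        [&& (p.1 <= C)%MS, (p.2 <= C)%MS & p.1 != p.2]) hdist p.1 p.2.

Definition APMCF (R mu : nat) (C : 'M[F]_n) : Prop :=
  covering_radius C = R /\
  forall x : 'rV[F]_n, dist_code C x = R ->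
    #|[set c : 'rV[F]_n | (c <= C)%MS && (hdist x c == R)]| = mu.

Definition PMCF (R mu : nat) (C : 'M[F]_n) : Prop :=
  APMCF R mu C /\ (2 * R <= min_dist C)%N.
End Codes.

(* Main.v *)
Require Import Defs.
From HB Require Import structures.
From mathcomp Require Import all_boot all_order all_algebra.
Set Implicit Arguments. Unset Strict Implicit. Unset Printing Implicit Defensive.
Import GRing.Theory.
Local Open Scope ring_scope.

Section Geo.
Variable F : finFieldType.
Local Notation pts := (PGpoints F 2).
Local Notation lns := (PGlines F 2).

Lemma pt_sub (P Q : 'M[F]_3) : P \in pts -> Q \in pts -> (P <= Q)%MS -> P = Q.
Proof.
rewrite !inE => /andP[/eqP rP /eqP gP] /andP[/eqP rQ /eqP gQ] sPQ.
have := (mxrank_leqif_eq sPQ).2; rewrite rP rQ eqxx => /esym/genmxP.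
by rewrite gP gQ.
Qed.

Lemma rank_add_pts (P Q : 'M[F]_3) : P \in pts -> Q \in pts -> P != Q ->
  \rank (P + Q)%MS = 2%N.
Proof.
move=> hP hQ nPQ; have := mxrank_sum_cap P Q.
have rP : \rank P = 1%N by move: hP; rewrite inE => /andP[/eqP -> _].
have rQ : \rank Q = 1%N by move: hQ; rewrite inE => /andP[/eqP -> _].
rewrite rP rQ.
have : (\rank (P :&: Q) <= 1)%N by rewrite -[X in (_ <= X)%N]rP; apply: mxrankS; apply: capmxSl.
case hr: (\rank (P :&: Q)) => [|[|//]] _; first by rewrite addn0.
exfalso; move/negP: nPQ; apply.
have hc : (P :&: Q == P)%MS by rewrite -(mxrank_leqif_eq (capmxSl P Q)).2 hr rP.
apply/eqP/pt_sub => //; apply: submx_trans (capmxSr P Q).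
by move/eqmxP: hc => ->.
Qed.

Definition lineof (P Q : 'M[F]_3) := <<(P + Q)%MS>>%MS.

Lemma lineof_line P Q : P \in pts -> Q \in pts -> P != Q -> lineof P Q \in lns.
Proof.
by move=> *; rewrite inE genmx_id eqxx genmxE rank_add_pts.
Qed.

Lemma lineof_subl P Q : (P <= lineof P Q)%MS.
Proof. by rewrite genmxE addsmxSl. Qed.
Lemma lineof_subr P Q : (Q <= lineof P Q)%MS.
Proof. by rewrite genmxE addsmxSr. Qed.

Lemma line_thru P Q L : P \in pts -> Q \in pts -> P != Q -> L \in lns ->
  (P <= L)%MS -> (Q <= L)%MS -> L = lineof P Q.
Proof.
move=> hP hQ nPQ; rewrite inE => /andP[/eqP rL /eqP gL] sP sQ.
have s : (P + Q <= L)%MS by rewrite addsmx_sub sP sQ.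
have := (mxrank_leqif_eq s).2; rewrite rL rank_add_pts // eqxx => /esym/genmxP.
by rewrite gL /lineof => ->.
Qed.

Lemma line_thruE P Q L : P \in pts -> Q \in pts -> P != Q ->
  (L \in lns) && (P <= L)%MS && (Q <= L)%MS = (L == lineof P Q).
Proof.
move=> hP hQ nPQ; apply/idP/eqP.
  by case/andP=> /andP[hL sP] sQ; apply: line_thru.
by move=> ->; rewrite lineof_line // lineof_subl lineof_subr.
Qed.
End Geo.

Lemma card_sumb (T : finType) (A : {pred T}) : #|A| = (\sum_(x : T) ((x \in A) : nat))%N.
Proof. rewrite -sum1_card big_mkcond /=; apply: eq_bigr => x _; by case: (x \in A). Qed.

Section Arc.
Variable F : finFieldType.
Local Notation pts := (PGpoints F 2).
Local Notation lns := (PGlines F 2).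
Variables (K : {set 'M[F]_3}) (s : nat).
Hypothesis Kpts : K \subset pts.
Hypothesis arc : forall L, L \in lns -> #|meetL L K| = 0%N \/ #|meetL L K| = s.

Lemma sum_lines_through Q : Q \in pts -> Q \notin K ->
  (\sum_(L in lns | (Q <= L)%MS) #|meetL L K|)%N = #|K|.
Proof.
move=> hQ QK.
transitivity (\sum_(L in lns | (Q <= L)%MS) \sum_(P in K) ((P <= L)%MS : nat))%N.
  apply: eq_bigr => L _; rewrite /meetL -sum1_card big_mkcond /= [RHS]big_mkcond /=.
  by apply: eq_bigr => P _; rewrite inE; case: (P \in K); case: (P <= L)%MS.
rewrite exchange_big /= -sum1_card; apply: eq_bigr => P PK.
have hP : P \in pts by apply: (subsetP Kpts).
have nQP : Q != P by apply: contraNneq QK => ->.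
rewrite (eq_bigr (fun L => if (P <= L)%MS then 1 else 0)%N); last by move=> L _; case: (P <= L)%MS.
rewrite -big_mkcondr /= (big_pred1 (lineof Q P)) // => L /=.
by rewrite line_thruE.
Qed.

Lemma secant_eq Q : Q \in pts -> Q \notin K ->
  (2 * secant_mult_sum K Q = (s - 1) * #|K|)%N.
Proof.
move=> hQ QK; rewrite /secant_mult_sum big_distrr /= -(sum_lines_through hQ QK) big_distrr /=.
apply: eq_bigr => L /andP[hL _]; case: (arc hL) => ->; first by rewrite bin0n muln0.
rewrite mulnC bin_ffact ffactnS ffactn1 subn1 mulnC //.
Qed.
End Arc.

Lemma card_sumb2 (T : finType) (A : {set T}) (b : pred T) :
  #|[set x in A | b x]| = (\sum_(x in A) (b x : nat))%N.
Proof.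
rewrite card_sumb [RHS]big_mkcond /=; apply: eq_bigr => x _; rewrite inE.
by case: (x \in A); case: (b x).
Qed.

Lemma row_sub_sc (F : fieldType) m (u v : 'rV[F]_m) : (u <= v)%MS -> exists a, u = a *: v.
Proof. by case/submxP => D ->; exists (D 0 0); rewrite {1}(mx11_scalar D) mul_scalar_mx. Qed.

Lemma bigmin_le (I : finType) (P : pred I) (G : I -> nat) m i :
  P i -> (\big[minn/m]_(j | P j) G j <= G i)%N.
Proof.
move=> Pi; move: (mem_index_enum i); elim: (index_enum I) => //= j rr IH.
rewrite inE big_cons => /orP[/eqP <-|/IH h]; first by rewrite Pi geq_minl.
by case: (P j) => //; apply: leq_trans h; apply: geq_minr.
Qed.

Section Code.
Variable F : finFieldType.
Local Notation pts := (PGpoints F 2).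
Local Notation lns := (PGlines F 2).
Variables (K : {set 'M[F]_3}) (s n : nat) (H : 'M[F]_(3, n)).
Hypothesis Kpts : K \subset pts.
Hypothesis arc : forall L, L \in lns -> #|meetL L K| = 0%N \/ #|meetL L K| = s.
Hypothesis hcorr : corresponds H K.

Definition r i : 'rV[F]_3 := row i H^T.
Definition pt i := col_point H i.
Lemma ptE i : pt i = <<r i>>%MS.
Proof. by rewrite /pt /col_point tr_col. Qed.
Lemma r_neq0 i : r i != 0.
Proof. by case: hcorr => h _ _; rewrite /r -tr_col trmx_eq0. Qed.
Lemma pt_inj : injective pt.
Proof. by case: hcorr. Qed.
Lemma ptK i : pt i \in K.
Proof. by case: hcorr => _ _ <-; apply: imset_f. Qed.
Lemma inK P : P \in K -> exists i, P = pt i.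
Proof. by case: hcorr => _ _ <- /imsetP[i _ ->]; exists i. Qed.
Lemma pt_pts i : pt i \in pts.
Proof. exact: (subsetP Kpts _ (ptK i)). Qed.

Definition syn (x : 'rV[F]_n) : 'rV[F]_3 := x *m H^T.
Definition supp (e : 'rV[F]_n) := [set i | e 0 i != 0].
Definition wt e := #|supp e|.

Lemma hdistE x c : hdist x c = wt (x - c).
Proof. by apply: eq_card => i; rewrite !inE !mxE subr_eq0. Qed.

Lemma inC c : (c <= code_of H)%MS = (syn c == 0).
Proof. by rewrite /code_of sub_kermx. Qed.

Lemma synS (e : 'rV[F]_n) (T : {set 'I_n}) : (forall t, t \notin T -> e 0 t = 0) ->
  syn e = \sum_(t in T) e 0 t *: r t.
Proof.
rewrite /syn mulmx_sum_row => h; rewrite [RHS]big_mkcond /=; apply: eq_bigr => t _.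
by case: ifP => // /negbT /h ->; rewrite scale0r.
Qed.

Lemma supp_out (e : 'rV[F]_n) (T : {set 'I_n}) : supp e \subset T -> forall t, t \notin T -> e 0 t = 0.
Proof.
move=> sT t tT; apply/eqP; apply: contraNT tT => h; apply: (subsetP sT); by rewrite inE.
Qed.

Lemma indep i j a b : i != j -> a *: r i + b *: r j = 0 -> a = 0 /\ b = 0.
Proof.
move=> nij h.
have a0 : a = 0.
  apply/eqP; apply: contraNT nij => a0.
  have : (r i <= r j)%MS.
    have -> : r i = a^-1 *: (- (b *: r j)).
      by move/eqP: h; rewrite addr_eq0 => /eqP <-; rewrite scalerA mulVf // scale1r.
    by rewrite scalemx_sub // (eqmx_opp _) scalemx_sub.
  move=> hs; apply/eqP/pt_inj/pt_sub; rewrite ?pt_pts // !ptE !genmxE //.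
subst; move: h; rewrite scale0r add0r => /eqP; rewrite scalemx_eq0 (negbTE (r_neq0 j)) orbF.
by move/eqP.
Qed.

Lemma uniq2 (e e' : 'rV[F]_n) i j : i != j -> supp e \subset [set i; j] -> supp e' \subset [set i; j] ->
  syn e = syn e' -> e = e'.
Proof.
move=> nij se se' hs.
have hd : forall t, t \notin [set i; j] -> (e - e') 0 t = 0.
  by move=> t tT; rewrite !mxE (supp_out se) // (supp_out se') // subr0.
have : syn (e - e') = 0 by move: hs; rewrite /syn mulmxBl => ->; rewrite subrr.
rewrite (synS hd) big_setU1 ?inE // big_set1 /= => /indep [] // hi hj.
apply/matrixP => a t; rewrite (ord1 a); apply/eqP; rewrite -subr_eq0.
case: (boolP (t \in [set i; j])) => [|tT]; last by move: (hd t tT); rewrite !mxE => ->.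
by rewrite !inE => /orP[] /eqP ->; [move: hi | move: hj]; rewrite !mxE => ->.
Qed.

Definition e2 i j a b : 'rV[F]_n := a *: 'e_i + b *: 'e_j.

Lemma e2E i j a b t : e2 i j a b 0 t = a * (t == i)%:R + b * (t == j)%:R.
Proof. by rewrite !mxE. Qed.

Lemma syn_e2 i j a b : syn (e2 i j a b) = a *: r i + b *: r j.
Proof. by rewrite /syn mulmxDl -!scalemxAl -!rowE. Qed.

Lemma supp_e2 i j a b : supp (e2 i j a b) \subset [set i; j].
Proof.
apply/subsetP => t; rewrite !inE e2E.
by case: (t == i); case: (t == j); rewrite ?mulr0 ?mulr1 ?addr0 ?eqxx.
Qed.

Lemma supp_e2_eq i j a b : i != j -> a != 0 -> b != 0 -> supp (e2 i j a b) = [set i; j].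
Proof.
move=> nij a0 b0; apply/eqP; rewrite eqEcard supp_e2 /= cards2 nij.
apply: (@leq_trans #|[set i; j]|); first by rewrite cards2 nij.
apply: subset_leq_card; apply/subsetP => t; rewrite !inE e2E => /orP[] /eqP ->.
  by rewrite eqxx (negbTE nij) mulr1 mulr0 addr0.
by rewrite eqxx (eq_sym j i) (negbTE nij) mulr1 mulr0 add0r.
Qed.

Lemma supp2 (e : 'rV[F]_n) i j : i != j -> wt e = 2%N -> e 0 i != 0 -> e 0 j != 0 -> supp e = [set i; j].
Proof.
move=> nij w ei ej; apply/esym/eqP; rewrite eqEcard cards2 nij /wt in w *; rewrite w andbT.
by apply/subsetP => t; rewrite !inE => /orP[] /eqP ->.
Qed.

Lemma le1 x : syn x = 0 \/ <<syn x>>%MS \in K -> exists e, (wt e <= 1)%N /\ syn e = syn x.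
Proof.
case=> [h|hK].
  exists 0; split; last by rewrite h /syn mul0mx.
  rewrite /wt (_ : supp 0 = set0) ?cards0 //; apply/setP => i; by rewrite !inE mxE eqxx.
have [i hi] := inK hK.
have : (syn x <= pt i)%MS by rewrite -hi genmxE.
rewrite ptE genmxE; case/row_sub_sc => a ha.
exists (e2 i i a 0); split; last by rewrite syn_e2 scale0r addr0 ha.
rewrite /wt; apply: leq_trans (subset_leq_card (supp_e2 i i a 0)) _.
by rewrite cards2 eqxx.
Qed.

Section Count.
Variable sg : 'rV[F]_3.
Hypothesis sg0 : sg != 0.
Hypothesis QK : <<sg>>%MS \notin K.
Local Notation Q := (<<sg>>%MS).

Lemma Qpts : Q \in pts.
Proof. by rewrite inE genmx_id eqxx genmxE rank_rV sg0. Qed.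
Lemma ptQ i : pt i != Q.
Proof. by apply: contraNneq QK => <-; apply: ptK. Qed.

Definition E := [set e | (wt e == 2%N) && (syn e == sg)].
Definition Li i := lineof (pt i) Q.
Lemma Li_line i : Li i \in lns.
Proof. exact: lineof_line (pt_pts i) Qpts (ptQ i). Qed.

Lemma rel i j : i != j -> (pt j <= Li i)%MS = (sg <= r i + r j)%MS.
Proof.
move=> nij; have nij' : pt i != pt j by rewrite (inj_eq pt_inj).
have sQ : ((sg <= lineof (pt i) (pt j)) = (sg <= r i + r j))%MS.
  by rewrite /lineof genmxE !ptE (adds_eqmx (genmxE _) (genmxE _)).
apply/idP/idP => h.
  have e : Li i = lineof (pt i) (pt j).
    exact: (line_thru (pt_pts i) (pt_pts j) nij' (Li_line i) (lineof_subl _ _) h).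
  rewrite -sQ -e /Li; apply: submx_trans (lineof_subr _ _); by rewrite genmxE.
have e : lineof (pt i) (pt j) = Li i.
  apply: (line_thru (pt_pts i) Qpts (ptQ i) (lineof_line (pt_pts i) (pt_pts j) nij') (lineof_subl _ _)).
  by rewrite genmxE sQ.
by rewrite -e lineof_subr.
Qed.

Lemma Sj i j : i != j ->
  #|[set e in E | (i \in supp e) && (j \in supp e)]| = (pt j <= Li i)%MS.
Proof.
move=> nij; rewrite rel //.
case: (boolP (sg <= r i + r j)%MS) => hs.
  case/sub_addsmxP: (hs) => u hu.
  set a := u.1 0 0; set b := u.2 0 0.
  have hab : sg = a *: r i + b *: r j.
    by rewrite hu {1}(mx11_scalar u.1) {1}(mx11_scalar u.2) !mul_scalar_mx.
  have a0 : a != 0.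
    apply: contraNneq QK => a0; rewrite (_ : <<sg>>%MS = pt j) ?ptK //.
    apply: pt_sub; rewrite ?Qpts ?pt_pts // ptE !genmxE hab a0 scale0r add0r scalemx_sub //.
  have b0 : b != 0.
    apply: contraNneq QK => b0; rewrite (_ : <<sg>>%MS = pt i) ?ptK //.
    apply: pt_sub; rewrite ?Qpts ?pt_pts // ptE !genmxE hab b0 scale0r addr0 scalemx_sub //.
  rewrite (_ : [set e in E | _] = [set e2 i j a b]) ?cards1 //.
  apply/setP => e; rewrite !inE; apply/idP/eqP.
    case/andP=> /andP[/eqP w /eqP se] /andP[ei ej].
    rewrite ?inE in ei ej.
    apply: (uniq2 nij); first by rewrite (supp2 nij).
      exact: supp_e2.
    by rewrite se syn_e2.
  move=> ->; rewrite /wt supp_e2_eq // cards2 nij syn_e2 -hab !eqxx !e2E !eqxx (eq_sym j i) (negbTE nij).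
  by rewrite !mulr1 !mulr0 addr0 add0r a0 b0.
apply/eqP; rewrite cards_eq0; apply/eqP/setP => e; rewrite !inE.
apply/negP => /andP[/andP[/eqP w /eqP se] /andP[ei ej]]; rewrite ?inE in ei ej.
move/negP: hs; apply.
have hd : forall t, t \notin [set i; j] -> e 0 t = 0.
  by apply: supp_out; rewrite (supp2 nij w ei ej) subxx.
rewrite -se (synS hd) big_setU1 ?inE // big_set1 /=.
by apply: addmx_sub_adds; apply: scalemx_sub.
Qed.

Lemma cardJ i : #|[set j | (j != i) && (pt j <= Li i)%MS]| = (s - 1)%N.
Proof.
have hs : #|meetL (Li i) K| = s.
  case: (arc (Li_line i)) => // /eqP; rewrite cards_eq0 => /eqP h.
  have : pt i \in meetL (Li i) K by rewrite inE ptK lineof_subl.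
  by rewrite h inE.
have h2 : #|[set j | (pt j <= Li i)%MS]| = s.
  rewrite -hs -(card_imset _ pt_inj); apply: eq_card => P; rewrite inE.
  apply/imsetP/andP => [[j]|[PK hP]]; first by rewrite inE => hj ->; rewrite ptK.
  by have [j ej] := inK PK; exists j; rewrite ?inE -?ej.
have := cardsD1 i [set j | (pt j <= Li i)%MS]; rewrite h2 inE /Li lineof_subl add1n => ->.
rewrite subn1 /=; apply: eq_card => j; by rewrite !inE.
Qed.

Lemma cardEi i : #|[set e in E | i \in supp e]| = (s - 1)%N.
Proof.
set Ei := [set e in E | i \in supp e].
transitivity (\sum_(e in Ei) #|supp e :\ i|)%N.
  rewrite -sum1_card; apply: eq_bigr => e; rewrite !inE => /andP[/andP[/eqP w _] ei].
  move: w; rewrite /wt (cardsD1 i) inE ei /=.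
  by case: #|_| => [|[|]].
transitivity (\sum_(e in Ei) \sum_j ((j \in supp e :\ i) : nat))%N.
  by apply: eq_bigr => e _; apply: card_sumb.
rewrite exchange_big /= -(cardJ i) card_sumb; apply: eq_bigr => j _.
rewrite -card_sumb2 !inE.
case: (eqVneq j i) => [->|nji] /=.
  rewrite (_ : [set e in Ei | _] = set0) ?cards0 //; apply/setP => e; rewrite !inE eqxx.
  by rewrite andbF.
have nij : i != j by rewrite eq_sym.
rewrite -(Sj nij); apply: eq_card => e; rewrite !inE nji /=.
by rewrite -!andbA.
Qed.

Lemma cardE : (#|E| * 2 = n * (s - 1))%N.
Proof.
rewrite -sum1_card big_distrl /=.
transitivity (\sum_(e in E) wt e)%N.
  by apply: eq_bigr => e; rewrite inE => /andP[/eqP -> _]; rewrite mul1n.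
transitivity (\sum_(e in E) \sum_i ((i \in supp e) : nat))%N.
  by apply: eq_bigr => e _; apply: card_sumb.
rewrite exchange_big /=.
transitivity (\sum_(i < n) (s - 1))%N; last by rewrite big_const_ord iter_addn_0 mulnC.
by apply: eq_bigr => i _; rewrite -card_sumb2 cardEi.
Qed.

End Count.
Local Notation C := (code_of H).

Lemma synB a b : syn (a - b) = syn a - syn b.
Proof. by rewrite /syn mulmxBl. Qed.

Lemma dist_le x c : (c <= C)%MS -> (dist_code C x <= hdist x c)%N.
Proof. by move=> hc; apply: bigmin_le. Qed.

Lemma dist_ge m x : (m <= n)%N -> (forall c, (c <= C)%MS -> (m <= hdist x c)%N) ->
  (m <= dist_code C x)%N.
Proof.
move=> hm h; rewrite /dist_code; apply: (big_ind (fun v => m <= v)%N) => //.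
by move=> a b ha hb; rewrite leq_min ha hb.
Qed.

Lemma dist_e x e : syn e = syn x -> (dist_code C x <= wt e)%N.
Proof.
move=> he; have hc : (x - e <= C)%MS by rewrite inC synB he subrr.
by apply: leq_trans (dist_le x hc) _; rewrite hdistE subKr.
Qed.

Lemma nice x : dist_code C x = 2%N -> syn x != 0 /\ <<syn x>>%MS \notin K.
Proof.
move=> hd.
have nle : ~ (syn x = 0 \/ <<syn x>>%MS \in K).
  move/le1 => [e [w he]]; have := dist_e he; rewrite hd => h.
  by have := leq_trans h w.
split; first by apply/eqP => h; apply: nle; left.
by apply/negP => h; apply: nle; right.
Qed.

Lemma dist_le2 x : (0 < n * (s - 1))%N -> (dist_code C x <= 2)%N.
Proof.
move=> hpos.
case: (boolP ((syn x == 0) || (<<syn x>>%MS \in K))) => h.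
  have [e [w he]] : exists e, (wt e <= 1)%N /\ syn e = syn x.
    by apply: le1; case/orP: h => [/eqP|]; [left|right].
  by apply: leq_trans (dist_e he) (leq_trans w _).
rewrite negb_or in h; case/andP: h => h0 hK.
have : (0 < #|E (syn x)|)%N.
  by rewrite lt0n; apply: contraTneq hpos => h; rewrite -(cardE h0 hK) h.
case/card_gt0P => e; rewrite inE => /andP[/eqP w /eqP he].
by have := dist_e he; rewrite w.
Qed.

Lemma countx x : dist_code C x = 2%N ->
  #|[set c | (c <= C)%MS && (hdist x c == 2%N)]| = (((s - 1) * n) %/ 2)%N.
Proof.
move=> hd; have [h0 hK] := nice hd.
have -> : [set c | (c <= C)%MS && (hdist x c == 2%N)] = [set x - e | e in E (syn x)].
  apply/setP => c; rewrite inE; apply/andP/imsetP.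
    case=> hc hh; exists (x - c); last by rewrite subKr.
    by rewrite inE -hdistE hh synB; move: hc; rewrite inC => /eqP ->; rewrite subr0 eqxx.
  case=> e; rewrite inE => /andP[w /eqP he] ->; split.
    by rewrite inC synB he subrr.
  by rewrite hdistE subKr.
rewrite card_imset; last exact: (can_inj (subKr x)).
by rewrite mulnC -(cardE h0 hK) mulnK.
Qed.

Lemma cardK : #|K| = n.
Proof. by case: hcorr => _ inj <-; rewrite card_imset // card_ord. Qed.

Lemma outside : (s < #|F|.+1)%N -> forall i0 j0 : 'I_n, i0 != j0 ->
  exists a : F, <<r i0 + a *: r j0>>%MS \notin K.
Proof.
move=> hsq i0 j0 nij.
have nij' : pt i0 != pt j0 by rewrite (inj_eq pt_inj).
apply/existsP; rewrite -negb_forall; apply/negP => /forallP hall.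
set f := fun a : F => <<r i0 + a *: r j0>>%MS.
set L := lineof (pt i0) (pt j0).
have hL : L \in lns by apply: lineof_line; rewrite ?pt_pts.
have finj : injective f.
  move=> a b /genmxP /andP[/row_sub_sc [c hc] _].
  have : (1 - c) *: r i0 + (a - c * b) *: r j0 = 0.
    by rewrite !scalerBl scale1r -scalerA addrACA -opprD -scalerDr -hc subrr.
  case/(indep nij) => /eqP; rewrite subr_eq0 => /eqP <- /eqP.
  by rewrite mul1r subr_eq0 => /eqP.
have nf : pt j0 \notin [set f a | a in setT].
  apply/imsetP => -[a _]; rewrite ptE /f => /genmxP /andP[_ /row_sub_sc [c hc]].
  have : 1 *: r i0 + (a - c) *: r j0 = 0.
    by rewrite scale1r scalerBl addrA hc subrr.
  by case/(indep nij) => /eqP; rewrite oner_eq0.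
have sub : pt j0 |: [set f a | a in setT] \subset meetL L K.
  apply/subsetP => P; rewrite !inE => /orP[/eqP ->|/imsetP[a _ ->]].
    by rewrite ptK lineof_subr.
  rewrite hall /f /L /lineof !genmxE !ptE (adds_eqmx (genmxE _) (genmxE _)).
  by apply: addmx_sub_adds => //; apply: scalemx_sub.
have := subset_leq_card sub; rewrite cardsU1 nf card_imset // cardsT.
case: (arc hL) => ->.
  by rewrite ltn0.
by move=> h; move: (leq_trans hsq h); rewrite ltnn.
Qed.

Lemma spans (i0 j0 : 'I_n) : i0 != j0 -> (s < n)%N -> spansPG K.
Proof.
move=> nij hsn; rewrite /spansPG eqn_leq rank_leq_row /=.
have nij' : pt i0 != pt j0 by rewrite (inj_eq pt_inj).
set S := (\sum_(P in K) P)%MS.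
have s2 : (pt i0 + pt j0 <= S)%MS.
  by rewrite addsmx_sub; apply/andP; split; apply: (sumsmx_sup (pt _)); rewrite ?ptK.
rewrite ltnNge; apply/negP => hr.
have : (S <= pt i0 + pt j0)%MS.
  rewrite -(mxrank_leqif_sup s2).2 rank_add_pts ?pt_pts //.
  by rewrite eqn_leq hr andbT -{1}(rank_add_pts (pt_pts i0) (pt_pts j0) nij') mxrankS.
move=> hS.
have hL : lineof (pt i0) (pt j0) \in lns by apply: lineof_line; rewrite ?pt_pts.
have hm : meetL (lineof (pt i0) (pt j0)) K = K.
  apply/setP => P; rewrite inE andb_idr // => PK.
  rewrite /lineof genmxE; apply: submx_trans hS; exact: sumsmx_sup PK _.
case: (arc hL); rewrite hm cardK.
  by move=> h; move: hsn; rewrite h ltn0.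
by move=> h; move: hsn; rewrite h ltnn.
Qed.

Lemma rankH : spansPG K -> \rank (H^T) = 3%N.
Proof.
rewrite /spansPG => /eqP hS; rewrite -[RHS]hS; apply: eqmx_rank.
case: hcorr => _ _ <-; rewrite big_imset /=; last by move=> a b _ _; apply: pt_inj.
apply/andP; split.
  apply/row_subP => i; apply: (sumsmx_sup i) => //; by rewrite /col_point tr_col genmxE.
apply/sumsmx_subP => i _; rewrite /col_point tr_col genmxE; exact: row_sub.
Qed.

Lemma wt_ge4 d : s = 2%N -> d != 0 -> syn d = 0 -> (4 <= wt d)%N.
Proof.
move=> s2 d0 sd; rewrite leqNgt; apply/negP => hw.
have : supp d != set0.
  apply: contraNneq d0 => h; apply/eqP/matrixP => a t; rewrite (ord1 a) mxE; apply/eqP.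
  by have := in_set0 t; rewrite -h inE => /negbFE.
case/set0Pn => i hi.
have hdi : d 0 i != 0 by move: hi; rewrite inE.
set T := supp d :\ i.
have hsupp : supp d = i |: T by rewrite setD1K.
have hT : (#|T| <= 2)%N by move: hw; rewrite /wt (cardsD1 i) hi add1n ltnS.
have hd : forall U : {set 'I_n}, supp d \subset U -> forall t, t \notin U -> d 0 t = 0.
  by move=> U hU; exact: supp_out hU.
move: hT; rewrite leq_eqVlt ltnS leq_eqVlt ltnS leqn0 => /or3P[] hc.
-
  case/cards2P: hc => j [l [njl hTe]].
  have ji : j != i.
    have : j \in T by rewrite hTe !inE eqxx.
    by rewrite /T in_setD1 => /andP[].
  have li : l != i.
    have : l \in T by rewrite hTe !inE eqxx orbT.
    by rewrite /T in_setD1 => /andP[].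
  have hU : supp d \subset i |: [set j; l] by rewrite hsupp hTe.
  have iU : i \notin [set j; l] by rewrite !inE negb_or !(eq_sym i) ji li.
  move: sd; rewrite (synS (hd _ hU)) (big_setU1 _ iU) /=.
  rewrite big_setU1 ?inE ?njl //= big_set1 => /eqP; rewrite addr_eq0 => /eqP hr.
  have sub : (r i <= r j + r l)%MS.
    rewrite -(eqmx_scale _ hdi) hr (eqmx_opp _).
    by apply: addmx_sub_adds; apply: scalemx_sub.
  have njl' : pt j != pt l by rewrite (inj_eq pt_inj).
  have hL : lineof (pt j) (pt l) \in lns by apply: lineof_line; rewrite ?pt_pts.
  have s3 : pt @: (i |: [set j; l]) \subset meetL (lineof (pt j) (pt l)) K.
    apply/subsetP => P /imsetP[t ht ->]; rewrite inE ptK /=.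
    move: ht; rewrite !inE => /or3P[] /eqP ->.
    + by rewrite /lineof !ptE !genmxE (adds_eqmx (genmxE _) (genmxE _)).
    + exact: lineof_subl.
    + exact: lineof_subr.
  have := subset_leq_card s3; rewrite card_imset //; last exact: pt_inj.
  rewrite cardsU1 cards2 njl iU /=.
  by case: (arc hL) => ->; rewrite ?s2.
-
  case/cards1P: hc => j hTe.
  have ji : j != i.
    have : j \in T by rewrite hTe !inE eqxx.
    by rewrite /T in_setD1 => /andP[].
  have hU : supp d \subset [set i; j] by rewrite hsupp hTe.
  have iU : i \notin [set j] by rewrite !inE (eq_sym i) ji.
  move: sd; rewrite (synS (hd _ hU)) (big_setU1 _ iU) /= big_set1.
  case/indep; first by rewrite eq_sym.
  by move=> h; move: hdi; rewrite h eqxx.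
-
  have hU : supp d \subset [set i] by rewrite hsupp (cards0_eq (eqP hc)) setU0.
  move: sd; rewrite (synS (hd _ hU)) big_set1 => /eqP; rewrite scalemx_eq0 (negbTE hdi).
  by rewrite (negbTE (r_neq0 i)).
Qed.

Lemma mind2 : s = 2%N -> (4 <= n.+1)%N -> (4 <= min_dist C)%N.
Proof.
move=> s2 hn; rewrite /min_dist; apply: (big_ind (fun v => 4 <= v)%N) => //.
  by move=> a b ha hb; rewrite leq_min ha hb.
case=> c1 c2 /= /and3P[h1 h2 h12]; rewrite hdistE; apply: wt_ge4 => //.
  by rewrite subr_eq0.
by rewrite synB; move: h1 h2; rewrite !inC => /eqP -> /eqP ->; rewrite subr0.
Qed.

Lemma le1_conv e : (wt e <= 1)%N -> syn e = 0 \/ <<syn e>>%MS \in K.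
Proof.
rewrite /wt leq_eqVlt ltnS leqn0 => /orP[] hw.
  case/cards1P: hw => t ht; right.
  have hd : forall u, u \notin [set t] -> e 0 u = 0 by apply: (supp_out (T:=[set t])); rewrite ht subxx.
  have et : e 0 t != 0 by move: (set11 t); rewrite -ht inE.
  rewrite (synS hd) big_set1 (eq_genmx (eqmx_scale _ et)) -ptE; exact: ptK.
left; have hd : forall u, u \notin set0 -> e 0 u = 0.
  by apply: (supp_out (T:=set0)); rewrite (cards0_eq (eqP hw)) subxx.
by rewrite (synS hd) big_set0.
Qed.

Lemma code_part (q : nat) : #|F| = q -> (2 <= s)%N -> (s <= q)%N -> n = ((s - 1) * q + s)%N ->
  [/\ \rank C = (n - 3)%N, covering_radius C = 2%N,
      (s = 2%N -> PMCF 2 (((s - 1) * n) %/ 2) C) &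
      ((4 <= s)%N -> APMCF 2 (((s - 1) * n) %/ 2) C)] /\ spansPG K /\ K != pts.
Proof.
move=> hq hs2 hsq hn.
have q2 : (2 <= q)%N by apply: leq_trans hs2 hsq.
have s1 : (0 < s - 1)%N by rewrite subn_gt0.
have h1 : (2 <= (s - 1) * q)%N by rewrite -[2%N]/(1 * 2)%N leq_mul.
have hn4 : (4 <= n)%N by rewrite hn -[4%N]/(2 + 2)%N leq_add.
have hsn : (s < n)%N by rewrite hn -{1}(add0n s) ltn_add2r (leq_trans _ h1).
have hpos : (0 < n * (s - 1))%N by rewrite muln_gt0 s1 (leq_trans _ hn4).
have n0 : (0 < n)%N by apply: leq_trans hn4.
have n1 : (1 < n)%N by apply: leq_trans hn4.
pose i0 : 'I_n := Ordinal n0; pose j0 : 'I_n := Ordinal n1.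
have nij : i0 != j0 by [].
have hsp := spans nij hsn.
have hsF : (s < #|F|.+1)%N by rewrite hq ltnS.
have [a ha] := outside hsF nij.
set x0 := e2 i0 j0 1 a.
have sx0 : syn x0 = r i0 + a *: r j0 by rewrite syn_e2 scale1r.
have sx0n : syn x0 != 0.
  rewrite sx0; apply/eqP => h; have := indep nij (_ : 1 *: r i0 + a *: r j0 = 0).
  by rewrite scale1r => /(_ h) [] /eqP; rewrite oner_eq0.
have dx0 : (2 <= dist_code C x0)%N.
  apply: dist_ge => // c hc; rewrite hdistE leqNgt; apply/negP => hw.
  have sc : syn (x0 - c) = syn x0 by rewrite synB; move: hc; rewrite inC => /eqP ->; rewrite subr0.
  case: (le1_conv hw); rewrite sc; first by move/eqP; rewrite (negbTE sx0n).
  by rewrite sx0 (negbTE ha).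
have cov : covering_radius C = 2%N.
  apply/eqP; rewrite eqn_leq; apply/andP; split.
    by apply/bigmax_leqP => x _; apply: dist_le2.
  by apply: leq_trans dx0 (leq_bigmax x0).
have apm : APMCF 2 (((s - 1) * n) %/ 2) C by split => // x; apply: countx.
split; last split => //.
  split => //.
  - by rewrite /code_of mxrank_ker rankH.
  - move=> s2; split => //; apply: mind2 => //; exact: leq_trans hn4 _.
apply/eqP => hK; move: ha; rewrite -sx0 hK Qpts //.
Qed.

End Code.

Section Build.
Variable F : finFieldType.
Local Notation pts := (PGpoints F 2).

Definition vec (P : 'M[F]_3) : 'rV[F]_3 := row (odflt ord0 [pick k | row k P != 0]) P.

Lemma vecP P : P \in pts -> vec P != 0 /\ <<vec P>>%MS = P.
Proof.
rewrite inE => /andP[/eqP rP /eqP gP].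
have nz : vec P != 0.
  rewrite /vec; case: pickP => [k //|h].
  have P0 : P = 0 by apply/row_matrixP => k; rewrite row0; apply/eqP; move/negbFE: (h k).
  by move: rP; rewrite P0 mxrank0.
split => //; rewrite -{2}gP; apply/genmxP.
by rewrite -(mxrank_leqif_eq (row_sub _ _)).2 rank_rV nz rP.
Qed.

Lemma exists_H (K : {set 'M[F]_3}) n : K \subset pts -> #|K| = n ->
  exists H : 'M[F]_(3, n), corresponds H K.
Proof.
move=> Kp hK.
pose f (i : 'I_n) : 'M[F]_3 := enum_val (cast_ord (esym hK) i).
have fK i : f i \in K by apply: enum_valP.
exists (\matrix_(a < 3, i < n) vec (f i) 0 a).
have hc i : col i (\matrix_(a < 3, i < n) vec (f i) 0 a) = (vec (f i))^T.
  by apply/matrixP => a b; rewrite !mxE.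
have hp i : col_point (\matrix_(a < 3, i < n) vec (f i) 0 a) i = f i.
  by rewrite /col_point hc trmxK; case: (vecP (subsetP Kp _ (fK i))).
split.
- by move=> i; rewrite hc trmx_eq0; case: (vecP (subsetP Kp _ (fK i))).
- move=> i j; rewrite !hp => /enum_val_inj; exact: cast_ord_inj.
- apply/setP => P; apply/imsetP/idP => [[i _ ->]|PK]; first by rewrite hp.
  exists (cast_ord hK (enum_rank_in PK P)) => //.
  by rewrite hp /f cast_ordK enum_rankK_in.
Qed.
End Build.

Theorem proposition5p1 (F : finFieldType) (v k q s n : nat) (K : {set 'M[F]_3}) :
  q = (2 ^ v)%N -> #|F| = q -> s = (2 ^ k)%N -> (1 <= k <= v)%N ->
  n = ((s - 1) * q + s)%N ->
  maximal_arc n s K ->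
  let mu := (((s - 1) * n) %/ 2)%N in
  optimal_saturating_nset n K mu /\
  forall H : 'M[F]_(3, n), corresponds H K ->
    let C := code_of H in
    [/\ \rank C = (n - 3)%N,
        covering_radius C = 2%N,
        (s = 2%N -> PMCF 2 mu C) &
        ((4 <= s)%N -> APMCF 2 mu C)].
Proof.
move=> hq hF hs /andP[k1 kv] hn [Kp cK arc] mu.
have hs2 : (2 <= s)%N by rewrite hs -{1}(expn1 2) leq_pexp2l.
have hsq : (s <= q)%N by rewrite hs hq leq_pexp2l.
have [H0 hH0] := exists_H Kp cK.
have [_ [hsp hneq]] := code_part Kp arc hH0 hF hs2 hsq hn.
have sec : forall Q, Q \in PGpoints F 2 :\: K -> secant_mult_sum K Q = mu.
  move=> Q; rewrite inE => /andP[QK hQ].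
  have := secant_eq Kp arc hQ QK; rewrite cK /mu mulnC => <-.
  by rewrite mulnK.
split.
  split => //; split => // Q hQ; by rewrite sec.
move=> H hH C; exact: (code_part Kp arc hH hF hs2 hsq hn).1.
Qed.
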